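(* Assume $C^\top C\succ0$, and let $\gamma>0$, $\sigma>0$, $\lambda>0$. Let $(\widetilde W_r,y_r)_{r\ge0}$ be generated by the alternating scheme described in the context from a feasible initial point $\widetilde W_0\in\mathcal{X}_1$, $y_0\in\mathbb{R}^{mn}_+$. Then $H_\sigma(\widetilde W_{r+1})\le H_\sigma(\widetilde W_r)$ for all $r\ge0$.
   Context: Let $n,m,M\ge1$, $p=m+n$. For $i=1,\dots,M$ let $A_i\in\mathbb{R}^{n\times n}$, $B_{2,i}\in\mathbb{R}^{n\times m}$, $F_i=\begin{bmatrix}A_i&B_{2,i}\\0&0\end{bmatrix}$. Let $B_1\in\mathbb{R}^{n\times l}$, $C\in\mathbb{R}^{q\times n}$, $D\in\mathbb{R}^{q\times m}$ with $C^\top D=0$, $D^\top D\succ0$, $B_1B_1^\top\succ0$; $Q=\begin{bmatrix}B_1B_1^\top&0\\0&0\end{bmatrix}$, $R=\begin{bmatrix}C^\top C&0\\0&D^\top D\end{bmatrix}$, $V_1=[0,\ I_m]$, $V_2=[I_n,\ 0]$, $\Psi_i(W)=-V_2(F_iW+WF_i^\top+Q)V_2^\top$. $\mathrm{vec}$ is column-stacking; $\mathcal{P}:=V_2\otimes V_1$, so $\mathcal{P}\,\mathrm{vec}(W)=\mathrm{vec}(V_1WV_2^\top)\in\mathbb{R}^{mn}$. $\Gamma^k_+=\{\mathrm{vec}(X):X\in\mathbb{S}^k_+\}$, $\delta_S$ the indicator of $S$, $\Omega=\{\mathrm{vec}(W):W_{ij}=0,\ 1\le i<j\le n\}$, $\mathcal{X}_1=\{\mathrm{vec}(W)\in\Gamma^p_+:\mathrm{vec}(\Psi_i(W))\in\Gamma^n_+\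 \forall i,\ \mathrm{vec}(W)\in\Omega\}$, and $r_1(\widetilde W)=\langle\mathrm{vec}(R),\widetilde W\rangle+\delta_{\mathcal{X}_1}(\widetilde W)$. For $x\in\mathbb{R}^{mn}$, $f_\sigma(x)=\sum_\ell(1-e^{-x_\ell/\sigma})$, $g_\sigma=-f_\sigma$, $g_\sigma^*$ its convex conjugate; $|\cdot|$ is componentwise. $H_\sigma(\widetilde W)=r_1(\widetilde W)+\gamma f_\sigma(|\mathcal{P}\widetilde W|)$. Scheme: for $r=1,2,\dots$: if $r$ is odd, set $\widetilde W_r=\widetilde W_{r-1}$ and $y_r=\operatorname{argmin}_{y\in\mathbb{R}^{mn}_+}\{\gamma g_\sigma^*(-y)+\gamma y^\top|\mathcal{P}\widetilde W_{r-1}|\}=\nabla f_\sigma(|\mathcal{P}\widetilde W_{r-1}|)$; if $r$ is even, set $y_r=y_{r-1}$ and $\widetilde W_r\in\operatorname{argmin}_{\widetilde W\in\mathcal{X}_1}\{\langle\mathrm{vec}(R),\widetilde W\rangle+\gamma y_{r-1}^\top|\mathcal{P}\widetilde W|+\frac1{2\lambda}\|\widetilde W-\widetilde W_{r-1}\|^2\}$. *)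

(* Defs.v *)
From HB Require Import structures.
From mathcomp Require Import all_boot all_order all_algebra.
From mathcomp Require Import boolp classical_sets reals ereal.
From mathcomp Require Import sequences exp.
Unset Printing Implicit Defensive.
Import Order.TTheory GRing.Theory Num.Theory.
Local Open Scope ring_scope.

Section Defs.
Context {R : realType}.

(* column-stacking vectorisation: vec A has entry A i j at index j*a + i *)
Definition vec {a b : nat} (A : 'M[R]_(a, b)) : 'cV[R]_(b * a) := (mxvec A^T)^T.
Definition unvec {a b : nat} (w : 'cV[R]_(b * a)) : 'M[R]_(a, b) := (vec_mx w^T)^T.

(* Kronecker product (A ⊗ B)_{(iA,iB),(jA,jB)} = A iA jA * B iB jB, with the
   standard index (iA,iB) |-> iA * c + iB  (= mxvec_index iA iB) *)
Definition kron {a b c d : nat} (A : 'M[R]_(a, b)) (B : 'M[R]_(c, d))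
  : 'M[R]_(a * c, b * d) :=
  \matrix_(r, s) \sum_(iA < a) \sum_(iB < c) \sum_(jA < b) \sum_(jB < d)
     (if (r == mxvec_index iA iB) && (s == mxvec_index jA jB)
      then A iA jA * B iB jB else 0).

Definition psd {k : nat} (X : 'M[R]_k) : Prop :=
  X^T = X /\ forall x : 'cV[R]_k, 0 <= (x^T *m X *m x) 0 0.
Definition pd {k : nat} (X : 'M[R]_k) : Prop :=
  X^T = X /\ forall x : 'cV[R]_k, x != 0 -> 0 < (x^T *m X *m x) 0 0.

Definition Gamma_plus (k : nat) : set 'cV[R]_(k * k) :=
  [set v | exists X : 'M[R]_k, psd X /\ v = vec X].

Definition nonneg_vec {k : nat} (y : 'cV[R]_k) : Prop := forall i, 0 <= y i 0.

Definition absv {k : nat} (x : 'cV[R]_k) : 'cV[R]_k := map_mx (fun t => `|t|) x.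

Definition inner {k : nat} (u v : 'cV[R]_k) : R := (u^T *m v) 0 0.
Definition sqnorm {k : nat} (u : 'cV[R]_k) : R := inner u u.

Definition f_sigma {k : nat} (sigma : R) (x : 'cV[R]_k) : R :=
  \sum_(l < k) (1 - expR (- (x l 0) / sigma)).
Definition grad_f_sigma {k : nat} (sigma : R) (x : 'cV[R]_k) : 'cV[R]_k :=
  \col_l (expR (- (x l 0) / sigma) / sigma).

Definition indicator {T : Type} (S : set T) (x : T) : \bar R :=
  if `[< S x >] then 0%E else +oo%E.

Definition Fmat {n m : nat} (A : 'M[R]_n) (B2 : 'M[R]_(n, m)) : 'M[R]_(n + m) :=
  block_mx A B2 0 0.
Definition Qmat {n l : nat} (m : nat) (B1 : 'M[R]_(n, l)) : 'M[R]_(n + m) :=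
  block_mx (B1 *m B1^T) 0 0 (0 : 'M[R]_m).
Definition Rmat {n m q : nat} (C : 'M[R]_(q, n)) (D : 'M[R]_(q, m)) : 'M[R]_(n + m) :=
  block_mx (C^T *m C) 0 0 (D^T *m D).
Definition V1 (n m : nat) : 'M[R]_(m, n + m) := row_mx 0 1%:M.
Definition V2 (n m : nat) : 'M[R]_(n, n + m) := row_mx 1%:M 0.

Definition Psi {n m l : nat} (A : 'M[R]_n) (B2 : 'M[R]_(n, m)) (B1 : 'M[R]_(n, l))
  (W : 'M[R]_(n + m)) : 'M[R]_n :=
  - (V2 n m *m (Fmat A B2 *m W + W *m (Fmat A B2)^T + Qmat m B1) *m (V2 n m)^T).

Definition Pmat (n m : nat) : 'M[R]_(n * m, (n + m) * (n + m)) := kron (V2 n m) (V1 n m).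

Definition Omega (n m : nat) : set 'cV[R]_((n + m) * (n + m)) :=
  [set w | forall i j : 'I_(n + m), (i < j)%N -> (j < n)%N -> unvec w i j = 0].

Definition X1 {n m l M : nat} (A : 'I_M -> 'M[R]_n) (B2 : 'I_M -> 'M[R]_(n, m))
  (B1 : 'M[R]_(n, l)) : set 'cV[R]_((n + m) * (n + m)) :=
  [set w | Gamma_plus (n + m) w
           /\ (forall i, Gamma_plus n (vec (Psi (A i) (B2 i) B1 (unvec w))))
           /\ Omega n m w].

Definition r1 {n m l q M : nat} (A : 'I_M -> 'M[R]_n) (B2 : 'I_M -> 'M[R]_(n, m))
  (B1 : 'M[R]_(n, l)) (C : 'M[R]_(q, n)) (D : 'M[R]_(q, m))
  (w : 'cV[R]_((n + m) * (n + m))) : \bar R :=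
  ((inner (vec (Rmat C D)) w)%:E + indicator (X1 A B2 B1) w)%E.

Definition H_sigma {n m l q M : nat} (A : 'I_M -> 'M[R]_n) (B2 : 'I_M -> 'M[R]_(n, m))
  (B1 : 'M[R]_(n, l)) (C : 'M[R]_(q, n)) (D : 'M[R]_(q, m)) (gamma sigma : R)
  (w : 'cV[R]_((n + m) * (n + m))) : \bar R :=
  (r1 A B2 B1 C D w + (gamma * f_sigma sigma (absv (Pmat n m *m w)))%:E)%E.

Definition prox_obj {n m : nat} {q : nat} (C : 'M[R]_(q, n)) (D : 'M[R]_(q, m))
  (gamma lambda : R) (y : 'cV[R]_(n * m)) (wprev w : 'cV[R]_((n + m) * (n + m))) : R :=
  inner (vec (Rmat C D)) w + gamma * inner y (absv (Pmat n m *m w))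
  + (2 * lambda)^-1 * sqnorm (w - wprev).

End Defs.

(* Main.v *)
Require Import Defs.
From HB Require Import structures.
From mathcomp Require Import all_boot all_order all_algebra.
From mathcomp Require Import boolp classical_sets reals ereal.
From mathcomp Require Import sequences exp.
From mathcomp Require Import ring lra.
Import Order.TTheory GRing.Theory Num.Theory.
Local Open Scope ring_scope.

Lemma innerE (R : realType) (k : nat) (u v : 'cV[R]_k) :
  inner u v = \sum_(i < k) u i 0 * v i 0.
Proof. by rewrite /inner !mxE; apply: eq_bigr => i _; rewrite mxE. Qed.

Lemma sqnorm_ge0 (R : realType) (k : nat) (u : 'cV[R]_k) : 0 <= sqnorm u.
Proof. rewrite /sqnorm innerE; apply: sumr_ge0 => i _; nra. Qed.

Lemma sqnorm0 (R : realType) (k : nat) : sqnorm (0 : 'cV[R]_k) = 0.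
Proof. rewrite /sqnorm innerE big1 // => i _; by rewrite mxE mul0r. Qed.

Lemma term_ineq (R : realType) (s a b : R) : 0 < s ->
  1 - expR (- a / s) <= 1 - expR (- b / s) + expR (- b / s) / s * a
     - expR (- b / s) / s * b.
Proof.
move=> hs.
set E := expR (- b / s).
have hE : 0 < E by rewrite expR_gt0.
have h1 : expR (- a / s) = E * expR ((b - a) / s).
  rewrite -expRD; congr expR; field; lra.
have h2 := expR_ge1Dx ((b - a) / s).
have h3 : E / s * a - E / s * b = - (E * ((b - a) / s)).
  field; lra.
have h4 : E * (1 + (b - a) / s) <= E * expR ((b - a) / s).
  by rewrite ler_wpM2l // ltW.
rewrite -addrA h3 h1; lra.
Qed.

Lemma f_concave (R : realType) (k : nat) (s : R) (a b : 'cV[R]_k) : 0 < s ->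
  f_sigma s a <= f_sigma s b + inner (grad_f_sigma s b) a
                 - inner (grad_f_sigma s b) b.
Proof.
move=> hs; rewrite /f_sigma !innerE -big_split -sumrB /=.
apply: ler_sum => i _; rewrite !mxE; exact: term_ineq.
Qed.

Lemma H_X1 (R : realType) (n m M l q : nat)
  (A : 'I_M -> 'M[R]_n) (B2 : 'I_M -> 'M[R]_(n, m))
  (B1 : 'M[R]_(n, l)) (C : 'M[R]_(q, n)) (D : 'M[R]_(q, m)) gamma sigma w :
  X1 A B2 B1 w ->
  H_sigma A B2 B1 C D gamma sigma w =
  (inner (vec (Rmat C D)) w + gamma * f_sigma sigma (absv (Pmat n m *m w)))%:E.
Proof.
move=> hw; rewrite /H_sigma /r1 /indicator asboolT //.
by rewrite adde0 EFinD.
Qed.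

Lemma final_arith (R : realType) (g a b Fa Fb Ia Ib s : R) :
  g * Fa <= g * Fb + g * Ia - g * Ib -> a + g * Ia + s <= b + g * Ib -> 0 <= s ->
  a + g * Fa <= b + g * Fb.
Proof. move=> h1 h2 h3; lra. Qed.

Theorem lemma27 (R : realType) (n m M l q : nat)
  (hn : (1 <= n)%N) (hm : (1 <= m)%N) (hM : (1 <= M)%N)
  (A : 'I_M -> 'M[R]_n) (B2 : 'I_M -> 'M[R]_(n, m))
  (B1 : 'M[R]_(n, l)) (C : 'M[R]_(q, n)) (D : 'M[R]_(q, m))
  (hCD : C^T *m D = 0) (hDD : pd (D^T *m D)) (hBB : pd (B1 *m B1^T))
  (hCC : pd (C^T *m C))
  (gamma sigma lambda : R) (hgamma : 0 < gamma) (hsigma : 0 < sigma)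
  (hlambda : 0 < lambda)
  (Wt : nat -> 'cV[R]_((n + m) * (n + m))) (y : nat -> 'cV[R]_(n * m))
  (hW0 : X1 A B2 B1 (Wt 0%N)) (hy0 : nonneg_vec (y 0%N))
  (hstep : forall k : nat,
     (odd k.+1 ->
        Wt k.+1 = Wt k /\
        y k.+1 = grad_f_sigma sigma (absv (Pmat n m *m Wt k))) /\
     (~~ odd k.+1 ->
        y k.+1 = y k /\
        X1 A B2 B1 (Wt k.+1) /\
        (forall W, X1 A B2 B1 W ->
           prox_obj C D gamma lambda (y k) (Wt k) (Wt k.+1)
           <= prox_obj C D gamma lambda (y k) (Wt k) W))) :
  forall r : nat,
    (H_sigma A B2 B1 C D gamma sigma (Wt r.+1)
     <= H_sigma A B2 B1 C D gamma sigma (Wt r))%E.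
Proof.
have inv : forall k, X1 A B2 B1 (Wt k).
  elim=> [//|k IH].
  have [ho he] := hstep k.
  case: (boolP (odd k.+1)) => hk.
    by rewrite (ho hk).1.
  by have [_ [? _]] := he hk.
move=> r.
case: (boolP (odd r.+1)) => hr.
  by case: ((hstep r).1 hr) => -> _.

case: r hr => [//|k] hk.
have hk1 : odd k.+1 by move: hk => /=; rewrite negbK.
have [eW ey] := (hstep k).1 hk1.
have [_ [hX hmin]] := (hstep k.+1).2 hk.
have hp := hmin _ (inv k.+1).
rewrite ey -eW in hp.
rewrite !H_X1 // lee_fin.
move: hp; rewrite /prox_obj subrr sqnorm0 mulr0 addr0.
set W := Wt k.+1; set W' := Wt k.+2.
have hc : 0 <= (2 * lambda)^-1 * sqnorm (W' - W).
  by apply: mulr_ge0; [rewrite invr_ge0; lra | exact: sqnorm_ge0].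
have hf := @f_concave R _ sigma (absv (Pmat n m *m W')) (absv (Pmat n m *m W)) hsigma.
have hg : gamma * f_sigma sigma (absv (Pmat n m *m W')) <=
  gamma * (f_sigma sigma (absv (Pmat n m *m W)) +
           inner (grad_f_sigma sigma (absv (Pmat n m *m W))) (absv (Pmat n m *m W'))
  - inner (grad_f_sigma sigma (absv (Pmat n m *m W))) (absv (Pmat n m *m W))).
  by rewrite ler_wpM2l // ltW.
move: hg; rewrite mulrBr mulrDr => hg hp.
apply: final_arith; [exact: hg | exact: hp | exact: hc].
Qed.
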